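(* Let $\{c_k\}_{k\ge1}$ be i.i.d. random variables whose common distribution is absolutely continuous on $[0,1]$ with almost everywhere positive and uniformly bounded density, let $\lambda>0$ and $l_k=e^{-\lambda k}$, and let $q(n)=\lfloor\log_2(\log n)\rfloor$. Then almost surely the following holds: for every $\varepsilon>0$ there exists $\delta>0$ such that for all sufficiently large $n$ and all $n',n''\in\{n,2n,\dots,2^{q(n)}n\}$, $$\frac{1}{\#(\mathcal{A}_{n'}\times\mathcal{A}_{n''})}\sum_{\substack{i\in\mathcal{A}_{n'},\,j\in\mathcal{A}_{n''}\\ i\ne j,\ |c_i-c_j|<\delta}}(-\log|c_i-c_j|)<\varepsilon.$$
   Context: $\mathcal{A}_n=\{n,\dots,2n-1\}$. *)

(* Defs.v *)
From HB Require Import structures.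
From mathcomp Require Import all_boot all_order all_algebra.
From mathcomp Require Import all_classical all_reals all_analysis.
Set Implicit Arguments. Unset Strict Implicit. Unset Printing Implicit Defensive.
Import Order.TTheory GRing.Theory Num.Theory.
Local Open Scope classical_set_scope.
Local Open Scope ring_scope.

Definition mutually_independent {d} {T : measurableType d} {R : realType}
  (P : probability T R) (I : set nat) (c : nat -> T -> R) : Prop :=
  forall (s : seq nat) (A : nat -> set R),
    uniq s -> {subset s <= I} -> (forall i, measurable (A i)) ->
    P (\bigcap_(i in [set` s]) (c i @^-1` A i)) =
    (\big[*%E/1%E]_(i <- s) P (c i @^-1` A i))%E.

Definition qlog {R : realType} (n : nat) : int :=
  Num.floor (ln (ln (n%:R : R)) / ln (2 : R)).

(* Main.v *)
Require Import Defs.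
Set Warnings "-notation-overridden -ambiguous-paths -notation-incompatible-prefix -deprecated".
From HB Require Import structures.
From mathcomp Require Import all_boot all_order all_algebra.
From mathcomp Require Import all_classical all_reals all_analysis.
From mathcomp Require Import ring lra zify.
From Stdlib Require Import Lia.
Import Order.TTheory GRing.Theory Num.Theory.
Local Open Scope classical_set_scope.
Local Open Scope ring_scope.
Section Prob.
Context d (T : measurableType d) (R : realType) (P : probability T R)
  (c : nat -> T -> R).
Hypothesis hmeas : forall k, (0 < k)%N -> measurable_fun setT (c k).
Hypothesis hindep : mutually_independent P [set k | (0 < k)%N] c.

Lemma mpre k (A : set R) : (0 < k)%N -> measurable A -> measurable (c k @^-1` A).
Proof. by move=> k0 mA; rewrite -[_ @^-1` _]setTI; exact: hmeas. Qed.

Lemma union_bound (I : eqType) (s : seq I) (F : I -> set T) (b : R) :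
  (forall i, measurable (F i)) ->
  (forall i, i \in s -> (P (F i) <= b%:E)%E) ->
  (P (\big[setU/set0]_(i <- s) F i) <= ((size s)%:R * b)%:E)%E.
Proof.
move=> mF; elim: s => [|x s IH] H; first by rewrite big_nil measure0 mul0r.
rewrite big_cons /= -nat1r mulrDl mul1r EFinD.
apply: le_trans (measureU2 _ _ _) _ => //.
  by apply: bigsetU_measurable => i _.
apply: leeD; first by apply: H; rewrite mem_head.
by apply: IH => i si; apply: H; rewrite inE si orbT.
Qed.

Lemma prod_bound (s : seq nat) (x : nat -> \bar R) (b : R) :
  (forall i, i \in s -> (0 <= x i <= b%:E)%E) ->
  (\big[*%E/1%E]_(i <- s) x i <= (b ^+ size s)%:E)%E.
Proof.
elim: s => [|y s IH] H; first by rewrite big_nil expr0.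
rewrite big_cons /= exprS EFinM.
have /andP[x0 xb] := H y (mem_head _ _).
apply: lee_pmul => //.
  by rewrite big_seq; apply: prode_ge0 => i si; have /andP[] := H i (mem_behead (s:=y::s) si).
by apply: IH => i si; apply: H; rewrite inE si orbT.
Qed.

Definition Ev L (g : 'I_L -> nat) (A : set R) (r : nat) : set T :=
  \big[setU/set0]_(S <- enum [set S : {set 'I_L} | #|S| == r]%SET)
     \bigcap_(i in [set` map g (enum S)]) c i @^-1` A.

Lemma cap_meas (s : seq nat) A : (forall k, k \in s -> (0 < k)%N) -> measurable A ->
  measurable (\bigcap_(i in [set` s]) c i @^-1` A).
Proof.
move=> g0 mA; case E: s => [|i s'].
  by rewrite (_ : [set` [::]] = set0) ?bigcap_set0 //; apply/seteqP; split => x.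
apply: bigcap_measurable.
  by exists i; rewrite /= mem_head.
by move=> k /= ks; apply: mpre => //; apply: g0; rewrite E.
Qed.

Lemma Ev_meas L g A r : (forall k, (0 < g k)%N) -> measurable A ->
  measurable (Ev L g A r).
Proof.
move=> g0 mA; apply: bigsetU_measurable => S _; apply: cap_meas => //.
by move=> k /mapP [j _ ->].
Qed.

Lemma Ev_prob L (g : 'I_L -> nat) A r (rho : R) : injective g ->
  (forall k, (0 < g k)%N) -> measurable A -> 0 <= rho ->
  (forall k, (P (c (g k) @^-1` A) <= rho%:E)%E) ->
  (P (Ev L g A r) <= ('C(L, r)%:R * rho ^+ r)%:E)%E.
Proof.
move=> ginj g0 mA rho0 hr.
apply: le_trans (@union_bound _ _ _ (rho ^+ r) _ _) _.
- move=> S; apply: cap_meas => //.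
  by move=> k /mapP [j _ ->].
- move=> S; rewrite mem_enum inE => /eqP cS.
  have := hindep (map g (enum S)) (fun=> A).
  rewrite /= => ->.
  + rewrite -cS cardE -(size_map g).
    apply: prod_bound => i /mapP [k _ ->].
    by rewrite measure_ge0 hr.
  + by rewrite (map_inj_uniq ginj) enum_uniq.
  + by move=> i /mapP [k _ ->]; rewrite inE /=.
  + by [].
- rewrite -cardE; have := card_draws ('I_L) r; rewrite card_ord => <-.
  by [].
Qed.

Lemma bigU_mem (I : eqType) (s : seq I) (F : I -> set T) i w :
  i \in s -> F i w -> (\big[setU/set0]_(j <- s) F j) w.
Proof.
elim: s => [//|y s IH]; rewrite inE big_cons => /orP[/eqP <- Fw|si Fw].
  by left.
by right; apply: IH.
Qed.

Lemma Ev_mem L (g : 'I_L -> nat) A r w :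
  (r <= #|[set k : 'I_L | c (g k) w \in A]%SET|)%N -> Ev L g A r w.
Proof.
case/card_geqP => s [us ss subs].
apply: (@bigU_mem _ _ _ [set k in s]%SET).
  rewrite mem_enum inE cardsE; apply/eqP.
  by rewrite -ss; apply/card_uniqP.
move=> i /= /mapP [k]; rewrite mem_enum inE => ks ->.
by have := subs k ks; rewrite inE => /set_mem.
Qed.
End Prob.
Section Tail.
Context (R : realType).

Lemma expR_half_le2 : expR (2^-1 : R) <= 2.
Proof.
have h := expR_ge1Dx (- 2^-1 : R).
rewrite expRN in h.
have e0 : 0 < expR (2^-1 : R) by apply: expR_gt0.
rewrite -lef_pV2 ?posrE //.
by apply: le_trans h; lra.
Qed.

Lemma fact_bound (r : nat) : (r%:R : R) ^+ r <= 4 ^+ r * (r`!)%:R.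
Proof.
case: r => [|n]; first by rewrite !expr0 mul1r fact0.
have h := @expR_ge1Dxn R (n.+1%:R / 2) n (divr_ge0 (ler0n _ _) (ler0n _ 2)).
have e2 : expR (n.+1%:R / 2 : R) <= 2 ^+ n.+1.
  rewrite mulrC expRM_natr; apply: lerXn2r; rewrite ?nnegrE ?expR_ge0 //.
  exact: expR_half_le2.
have : (n.+1%:R / 2) ^+ n.+1 / (n.+1)`!%:R <= 2 ^+ n.+1 :> R.
  by apply: le_trans _ (le_trans h e2); lra.
have F0 : 0 < (n.+1)`!%:R :> R by rewrite ltr0n fact_gt0.
have t0 : 0 < 2 ^+ n.+1 :> R by rewrite exprn_gt0.
rewrite ?(divr_ge0, exprn_ge0, ler0n, invr_ge0) // => H.
rewrite expr_div_n ler_pdivrMr // ler_pdivrMr // in H.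
by rewrite (_ : 4 = 2 * 2 :> R) ?exprMn; [rewrite -mulrA mulrC|rewrite -natrM].
Qed.

Lemma ffact_le_exp L r : (L ^_ r <= L ^ r)%N.
Proof.
elim: r L => [|r IH] L; first by rewrite ffactn0 expn0.
rewrite ffactnS expnS leq_mul2l; apply/orP; right.
apply: leq_trans (IH _) _; case: r {IH} => [|r]; first by rewrite !expn0.
by rewrite leq_exp2r // leq_pred.
Qed.

Lemma binom_tail (L r : nat) (rho : R) : 0 <= rho ->
  8 * L%:R * rho <= r%:R -> 'C(L, r)%:R * rho ^+ r <= (2 ^+ r)^-1.
Proof.
move=> rho0 hr.
have F0 : 0 < r`!%:R :> R by rewrite ltr0n fact_gt0.
have t0 : 0 < 2 ^+ r :> R by rewrite exprn_gt0.
have hC : 'C(L, r)%:R * r`!%:R <= L%:R ^+ r :> R.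
  by rewrite -natrM -natrX ler_nat bin_ffact ffact_le_exp.
have hF := fact_bound r.
have hP : (8 * L%:R * rho) ^+ r <= r%:R ^+ r.
  by apply: lerXn2r; rewrite ?nnegrE // !mulr_ge0.
have key : 2 ^+ r * (L%:R ^+ r * rho ^+ r) <= r`!%:R.
  have H := le_trans hP hF.
  have h4 : 0 < 4 ^+ r :> R by rewrite exprn_gt0.
  rewrite -(ler_pM2l h4); apply: le_trans H; rewrite le_eqVlt; apply/orP; left.
  apply/eqP; rewrite (_ : (8:R) = 4 * 2); last by rewrite -natrM.
  by rewrite !exprMn; ring.
rewrite -(ler_pM2l t0) mulfV ?gt_eqF // -(ler_pM2r F0) mul1r.
apply: le_trans key; rewrite -mulrA ler_pM2l // mulrAC.
by apply: ler_wpM2r; [exact: exprn_ge0| exact: hC].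
Qed.
End Tail.
Section Dens.
Context d (T : measurableType d) (R : realType) (P : probability T R)
  (c : nat -> T -> R) (f : R -> R) (M : R).
Hypothesis hfmeas : measurable_fun setT f.
Hypothesis hfge0 : forall x, 0 <= f x.
Hypothesis hM : forall x, f x <= M.
Hypothesis hdistr : forall k, (0 < k)%N -> forall A : set R, measurable A ->
     P (c k @^-1` A) = (\int[@lebesgue_measure R]_(x in A `&` `[0%R, 1%R]%classic) (f x)%:E)%E.

Lemma M_ge0 : 0 <= M. Proof. exact: le_trans (hfge0 0) (hM 0). Qed.

Lemma dens_bound k (a b : R) : (0 < k)%N -> a < b ->
  (P (c k @^-1` `[a, b[%classic) <= (M * (b - a))%:E)%E.
Proof.
move=> k0 ab; rewrite hdistr //.
have mD : measurable (`[a, b[%classic `&` `[0%R, 1%R]%classic : set R).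
  by apply: measurableI; exact: measurable_itv.
apply: (@le_trans _ _ (\int[@lebesgue_measure R]_(x in `[a, b[%classic `&` `[0%R, 1%R]%classic) (cst M%:E x))%E).
  apply: (@ge0_le_integral _ _ _ (@lebesgue_measure R) _ mD) => //.
  - by move=> x _; rewrite lee_fin.
  - apply/measurable_realfun.measurable_EFinP; apply: measurable_funS hfmeas => //.
  - by move=> x _; rewrite lee_fin.
rewrite integral_cst // EFinM.
apply: lee_pmul => //; first by rewrite lee_fin M_ge0.
apply: (@le_trans _ _ (lebesgue_measure (`[a, b[%classic : set R))).
  by apply: le_measure => //; rewrite inE //; exact: measurable_itv.
by rewrite lebesgue_measure_itv /= lte_fin ab -EFinD.
Qed.

Lemma out01 k : (0 < k)%N -> P (c k @^-1` ~` `[0%R, 1%R]%classic) = 0%E.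
Proof.
move=> k0; rewrite hdistr //; last by apply: measurableC; exact: measurable_itv.
by rewrite setICl integral_set0.
Qed.
End Dens.
Section Det.
Context (R : realType).

Definition W (m u : nat) : set R :=
  `[(u%:R - 1) / 2 ^+ m, (u%:R + 2) / 2 ^+ m[%classic.

Lemma W_meas m u : measurable (W m u).
Proof. exact: measurable_itv. Qed.

Lemma window_mem (y z : R) m : 0 <= y <= 1 -> `|y - z| < (2 ^+ m)^-1 ->
  (Num.truncn (y * 2 ^+ m) <= 2 ^ m)%N /\ W m (Num.truncn (y * 2 ^+ m)) z.
Proof.
move=> /andP[y0 y1] yz.
have t0 : 0 < 2 ^+ m :> R by rewrite exprn_gt0.
have yt0 : 0 <= y * 2 ^+ m by rewrite mulr_ge0 // ltW.
have /andP[u1 u2] := truncn_itv yt0.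
set u := Num.truncn _ in u1 u2 *.
have hyz : `|y * 2 ^+ m - z * 2 ^+ m| < 1.
  by rewrite -mulrBl normrM (gtr0_norm t0) -ltr_pdivlMr // div1r.
move: hyz; rewrite ltr_norml => /andP[h1 h2].
split.
  rewrite -(ler_nat R) natrX; apply: le_trans u1 _.
  by rewrite -[X in _ <= X]mul1r ler_wpM2r // ltW.
rewrite /W /= in_itv /= ler_pdivrMr // ltr_pdivlMr //.
rewrite -natr1 in u2.
apply/andP; split; lra.
Qed.

Lemma sum_sub (F : nat -> nat) a b a' b' : (a' <= a)%N -> (b <= b')%N ->
  (\sum_(a <= j < b) F j <= \sum_(a' <= j < b') F j)%N.
Proof.
move=> h1 h2; case: (leqP b a) => ab; first by rewrite big_geq.
have ab' : (a <= b')%N by apply: leq_trans h2; exact: ltnW.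
rewrite (@big_cat_nat _ _ _ a a' b') //= (@big_cat_nat _ _ _ b a b') //=; last exact: ltnW.
by rewrite addnC -addnA leq_addr.
Qed.

Lemma card_sum (L : nat) (Q : nat -> bool) :
  #|[set k : 'I_L | Q k]%SET| = (\sum_(0 <= k < L) Q k)%N.
Proof.
rewrite big_mkord -sum1_card big_mkcond /=.
by apply: eq_bigr => k _; rewrite !inE; case: (Q k).
Qed.

Lemma block_count (Q : nat -> bool) (p n2 : nat) :
  (2 ^ p <= n2)%N -> (n2 < 2 ^ p.+1)%N ->
  (\sum_(n2 <= j < 2 * n2) Q j <= #|[set k : 'I_(3 * 2 ^ p) | Q (2 ^ p + k)%N]%SET|)%N.
Proof.
move=> h1 h2; rewrite (card_sum _ (fun j => Q (2 ^ p + j)%N)).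
apply: leq_trans (@sum_sub Q n2 (2 * n2) (2 ^ p) (2 ^ p + 3 * 2 ^ p) h1 _) _.
  by rewrite expnS in h2; lia.
rewrite -{1}(add0n (2 ^ p)%N) big_addn addKn.
by under eq_bigr do rewrite addnC.
Qed.
End Det.
Section Real.
Context (R : realType).

Definition ind (b : bool) : R := if b then 1 else 0.
Lemma ind_ge0 b : 0 <= ind b. Proof. by rewrite /ind; case: b. Qed.

Lemma ln2_gt0 : 0 < ln (2 : R). Proof. by apply: ln_gt0; rewrite ltr1n. Qed.

Lemma neg_ln_le (x : R) k : (2 ^+ k.+1)^-1 <= x -> - ln x <= k.+1%:R * ln 2.
Proof.
move=> hx.
have t0 : 0 < (2 ^+ k.+1 : R) by rewrite exprn_gt0.
have x0 : 0 < x by apply: lt_le_trans hx; rewrite invr_gt0.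
rewrite lerNl -mulNr.
have -> : - k.+1%:R * ln (2:R) = ln ((2 ^+ k.+1)^-1).
  by rewrite lnV ?posrE // lnXn // mulNr mulr_natl.
by rewrite ler_ln ?posrE ?invr_gt0.
Qed.

Lemma lnbound (x : R) K D : (2 ^+ (K + D).+1)^-1 <= x -> x < (2 ^+ K)^-1 ->
  - ln x <= \sum_(K <= m < (K + D).+1) m.+1%:R * ln 2 * ind (x < (2 ^+ m)^-1).
Proof.
have l2 := ln2_gt0.
elim: D K => [|D IH] K h1 h2.
  by rewrite addn0 big_nat1 /ind h2 mulr1; apply: neg_ln_le; rewrite addn0 in h1.
rewrite big_ltn; last by rewrite ltnS leq_addr.
have t0 : 0 <= \sum_(K.+1 <= m < (K + D.+1).+1) m.+1%:R * ln (2:R) * ind (x < (2 ^+ m)^-1).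
  by apply: sumr_ge0 => m _; rewrite /ind; case: ifP => _; rewrite ?mulr1 ?mulr0 // mulr_ge0 // ltW.
rewrite {1}/ind h2 mulr1.
case: (ltP x (2 ^+ K.+1)^-1) => hx.
  have h1' : (2 ^+ (K.+1 + D).+1)^-1 <= x by rewrite addSnnS.
  have := IH K.+1 h1' hx; rewrite addSnnS => H.
  by apply: le_trans H _; rewrite lerDr !mulr_ge0 // ltW.
by apply: le_trans (@neg_ln_le x K hx) _; rewrite lerDl.
Qed.

Lemma geo_sum K D :
  \sum_(K <= m < K + D) m.+1%:R / (2 ^+ m : R) <= (2 * K%:R + 4) / 2 ^+ K.
Proof.
elim: D K => [|D IH] K.
  by rewrite addn0 big_geq // divr_ge0 ?exprn_ge0 // addr_ge0 // mulr_ge0.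
rewrite big_ltn; last lia.
rewrite -addSnnS.
apply: le_trans (lerD (le_refl _) (IH K.+1)) _.
have t0 : 0 < (2 ^+ K : R) by rewrite exprn_gt0.
rewrite exprS invfM.
rewrite le_eqVlt; apply/orP; left; apply/eqP; rewrite -natr1.
by field; rewrite gt_eqF.
Qed.

Lemma pow4 p : ((p + 4) ^ 4 <= 2 ^ (p + 11))%N.
Proof.
elim: p => [|p IH]; first by [].
case: (leqP 2 p) => hp.
  have e : (2 ^ (p.+1 + 11) = 2 * 2 ^ (p + 11))%N by rewrite addSn expnS.
  rewrite e; apply: leq_trans (_ : (2 * (p + 4) ^ 4 <= _)%N); last by rewrite leq_mul2l IH orbT.
  rewrite addSn; nia.
by case: p hp IH => [|[|]].
Qed.

Lemma eventually_small (C eta : R) : 0 <= C -> 0 < eta ->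
  exists P0, forall p, (P0 <= p)%N -> C * (p%:R + 4) ^+ 3 / 2 ^+ p < eta.
Proof.
move=> C0 e0.
exists (Num.truncn (C * 2 ^+ 11 / eta)).+1 => p hp.
have hp4 : 0 < p%:R + 4 :> R by rewrite ltr_wpDl.
have t0 : 0 < 2 ^+ p :> R by rewrite exprn_gt0.
have h4 : (p%:R + 4) ^+ 4 <= 2 ^+ p * 2 ^+ 11 :> R.
  by have := pow4 p; rewrite -(ler_nat R) !natrX natrD exprD.
have hq : (p%:R + 4) ^+ 3 / 2 ^+ p <= 2 ^+ 11 / (p%:R + 4) :> R.
  rewrite ler_pdivrMr // mulrAC ler_pdivlMr //.
  by rewrite -exprSr mulrC.
apply: le_lt_trans (_ : C * (2 ^+ 11 / (p%:R + 4)) < eta).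
  by rewrite -mulrA ler_wpM2l.
rewrite mulrA ltr_pdivrMr // -ltr_pdivrMl //.
have hp' : (Num.truncn (C * 2 ^+ 11 / eta)).+1%:R <= p%:R + 4 :> R.
  by rewrite -(ler_nat R) in hp; apply: le_trans hp _; rewrite lerDl.
apply: lt_le_trans hp'; rewrite mulrC.
exact: truncnS_gt.
Qed.
Lemma main_det (x : nat -> R) (M : R) (K p n1 n2 : nat) :
  0 <= M -> (n1 <= n2)%N -> (0 < n1)%N -> (2 ^ p <= n2)%N -> (n2 < 2 ^ p.+1)%N ->
  (K <= 3 * p + 5)%N ->
  (forall j, (0 < j)%N -> 0 <= x j <= 1) ->
  (forall i j, (0 < i)%N -> (0 < j)%N -> (i < 2 ^ (p + 2))%N -> (j < 2 ^ (p + 2))%N ->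
      i != j -> (2 ^+ (3 * (p + 2)))^-1 <= `|x i - x j|) ->
  (forall m y, (m < 3 * p + 7)%N -> 0 <= y <= 1 ->
      \sum_(n2 <= j < 2 * n2) ind (`|y - x j| < (2 ^+ m)^-1)
        <= 72 * M * 2 ^+ p / 2 ^+ m + (5 * p + 16)%N%:R) ->
  (\sum_(n1 <= i < 2 * n1) \sum_(n2 <= j < 2 * n2 | (i != j) && (`|x i - x j| < (2 ^+ K)^-1))
       (- ln `|x i - x j|)) / (n1%:R * n2%:R)
    <= 288 * M * (K%:R + 4) ^+ 3 / 2 ^+ K + 90 * (p%:R + 4) ^+ 3 / 2 ^+ p.
Proof.
move=> M0 n12 n10 hp1 hp2 hK h01 htiny hcount.
have l2 := ln2_gt0.
set B := (3 * p + 6)%N.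
have hB : B = (K + (B - K - 1)).+1 by rewrite /B; lia.
pose G i j m := m.+1%:R * ln (2:R) * ind (`|x i - x j| < (2 ^+ m)^-1).
have G0 i j m : 0 <= G i j m by rewrite /G !mulr_ge0 ?ind_ge0 // ltW.
have step1 : \sum_(n1 <= i < 2 * n1) \sum_(n2 <= j < 2 * n2 | (i != j) && (`|x i - x j| < (2 ^+ K)^-1))
       (- ln `|x i - x j|) <= \sum_(n1 <= i < 2 * n1) \sum_(n2 <= j < 2 * n2) \sum_(K <= m < B) G i j m.
  apply: ler_sum_nat => i /andP[i1 i2].
  rewrite big_mkcond; apply: ler_sum_nat => j /andP[j1 j2].
  case: ifP => [/andP[ij dK]|_]; last by apply: sumr_ge0 => m _.
  rewrite hB; apply: lnbound => //.
  rewrite -hB /B (_ : (3 * p + 6 = 3 * (p + 2))%N); last lia.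
  apply: htiny => //; try lia.
    by rewrite !expnD expnS in hp2 *; lia.
    by rewrite !expnD expnS in hp2 *; lia.
pose beta m := 72 * M * 2 ^+ p / 2 ^+ m + (5 * p + 16)%N%:R : R.
have step2 : \sum_(n1 <= i < 2 * n1) \sum_(n2 <= j < 2 * n2) \sum_(K <= m < B) G i j m
   = \sum_(K <= m < B) (m.+1%:R * ln 2) * \sum_(n1 <= i < 2 * n1) \sum_(n2 <= j < 2 * n2)
        ind (`|x i - x j| < (2 ^+ m)^-1).
  rewrite (eq_bigr (fun i => \sum_(K <= m < B) \sum_(n2 <= j < 2 * n2) G i j m)); last first.
    by move=> i _; exact: exchange_big.
  rewrite exchange_big; apply: eq_bigr => m _.
  rewrite mulr_sumr; apply: eq_bigr => i _; rewrite mulr_sumr.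
  by apply: eq_bigr => j _.
have step3 m : (m < B)%N -> \sum_(n1 <= i < 2 * n1) \sum_(n2 <= j < 2 * n2)
        ind (`|x i - x j| < (2 ^+ m)^-1) <= n1%:R * beta m.
  move=> mB.
  apply: le_trans (_ : \sum_(n1 <= i < 2 * n1) beta m <= _).
    apply: ler_sum_nat => i /andP[i1 i2]; apply: hcount; first by rewrite /B in mB; lia.
    by apply: h01; lia.
  by rewrite sumr_const_nat mulr_natl (_ : (2 * n1 - n1 = n1)%N) //; lia.
set N1 := n1%:R : R; set N2 := n2%:R : R.
have N10 : 0 < N1 by rewrite ltr0n.
have T0 : 0 < 2 ^+ p :> R by rewrite exprn_gt0.
have TN : 2 ^+ p <= N2 by rewrite /N2 -natrX ler_nat.
have N20 : 0 < N2 by apply: lt_le_trans TN.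
have l2' : ln (2:R) <= 2 by apply: ltW; apply: ln_sublinear.
pose cc := 2 * (5 * p + 16)%N%:R / 2 ^+ p : R.
have step4 m : (m.+1%:R * ln 2) * (N1 * beta m) <=
    N1 * N2 * (144 * M * (m.+1%:R / 2 ^+ m) + cc * m.+1%:R).
  have Tm0 : 0 < 2 ^+ m :> R by rewrite exprn_gt0.
  pose a := M / 2 ^+ m; pose bb := (5 * p + 16)%N%:R / 2 ^+ p : R.
  have a0 : 0 <= a by rewrite divr_ge0 // ltW.
  have bb0 : 0 <= bb by rewrite divr_ge0 // ltW.
  have -> : (m.+1%:R * ln 2) * (N1 * beta m) = (m.+1%:R * N1 * (72 * a + bb)) * (ln 2 * 2 ^+ p).
    by rewrite /beta /a /bb; field; rewrite !gt_eqF.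
  have -> : N1 * N2 * (144 * M * (m.+1%:R / 2 ^+ m) + cc * m.+1%:R) =
      (m.+1%:R * N1 * (72 * a + bb)) * (2 * N2).
    by rewrite /cc /a /bb; field; rewrite !gt_eqF.
  apply: ler_wpM2l; first by rewrite !mulr_ge0 // ?addr_ge0 ?mulr_ge0 // ltW.
  by apply: ler_pM => //; apply: ltW.
have step5 : \sum_(K <= m < B) (m.+1%:R * ln 2) * \sum_(n1 <= i < 2 * n1) \sum_(n2 <= j < 2 * n2)
        ind (`|x i - x j| < (2 ^+ m)^-1)
    <= N1 * N2 * (144 * M * \sum_(K <= m < B) (m.+1%:R / 2 ^+ m) + cc * \sum_(K <= m < B) m.+1%:R).
  rewrite mulr_sumr mulr_sumr -big_split mulr_sumr.
  apply: ler_sum_nat => m /andP[_ mB].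
  apply: le_trans (step4 m).
  by apply: ler_wpM2l; [rewrite mulr_ge0 // ltW | exact: step3].
have hgeo : \sum_(K <= m < B) (m.+1%:R / 2 ^+ m) <= (2 * K%:R + 4) / 2 ^+ K :> R.
  by rewrite (_ : B = K + (B - K))%N ?geo_sum //; lia.
have hsq : \sum_(K <= m < B) m.+1%:R <= (B%:R : R) ^+ 2.
  rewrite -natr_sum -natrX ler_nat.
  apply: leq_trans (_ : (\sum_(K <= m < B) B <= _)%N).
    by rewrite big_nat [X in (_ <= X)%N]big_nat; apply: leq_sum => m /andP[_ mB].
  by rewrite sum_nat_const_nat; nia.
have cc0 : 0 <= cc by rewrite /cc divr_ge0 // ltW.
rewrite ler_pdivrMr ?mulr_gt0 //.
apply: le_trans step1 _; rewrite step2; apply: le_trans step5 _.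
rewrite [X in _ <= X]mulrC; apply: ler_wpM2l; first by rewrite mulr_ge0 // ltW.
have K0 : 0 < 2 ^+ K :> R by rewrite exprn_gt0.
apply: lerD.
  apply: le_trans (_ : 144 * M * ((2 * K%:R + 4) / 2 ^+ K) <= _).
    by apply: ler_wpM2l => //; rewrite mulr_ge0.
  rewrite mulrA ler_pM2r ?invr_gt0 //.
  have k0 : 0 <= K%:R :> R by [].
  have h : 2 * K%:R + 4 <= 2 * (K%:R + 4) ^+ 3 :> R.
    have h1 : 1 <= (K%:R + 4) ^+ 2 :> R by nra.
    rewrite exprS; nra.
  apply: le_trans (ler_wpM2l _ h) _; first by rewrite mulr_ge0.
  by rewrite le_eqVlt; apply/orP; left; apply/eqP; ring.
apply: le_trans (_ : cc * B%:R ^+ 2 <= _); first by apply: ler_wpM2l.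
rewrite /cc /B mulrAC ler_pM2r ?invr_gt0 //.
have p0 : 0 <= p%:R :> R by [].
rewrite !natrD ?natrM; nra.
Qed.
End Real.
Lemma lin_exp p : (3 * p + 7 <= 2 ^ (p + 9))%N.
Proof.
elim: p => [//|p IH].
have : (1 <= 2 ^ (p + 9))%N by rewrite expn_gt0.
rewrite addSn expnS; lia.
Qed.

Section Final.
Context d (T : measurableType d) (R : realType) (P : probability T R)
  (c : nat -> T -> R) (f : R -> R) (M : R).
Hypothesis hmeas : forall k, (0 < k)%N -> measurable_fun setT (c k).
Hypothesis hindep : mutually_independent P [set k | (0 < k)%N] c.
Hypothesis hfmeas : measurable_fun setT f.
Hypothesis hfge0 : forall x, 0 <= f x.
Hypothesis hM : forall x, f x <= M.
Hypothesis hdistr : forall k, (0 < k)%N -> forall A : set R, measurable A ->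
     P (c k @^-1` A) = (\int[@lebesgue_measure R]_(x in A `&` `[0%R, 1%R]%classic) (f x)%:E)%E.

Let M0 : 0 <= M. Proof. exact: le_trans (hfge0 0) (hM 0). Qed.

Definition r0 (p : nat) := (5 * p + 16)%N.
Definition gC (p : nat) : 'I_(3 * 2 ^ p) -> nat := fun k => (2 ^ p + k)%N.
Definition rr (p m : nat) := (Num.truncn (72 * M * 2 ^+ p / 2 ^+ m) + 1 + r0 p)%N.
Definition BadC p := \big[setU/set0]_(m <- iota 0 (3 * p + 7))
  \big[setU/set0]_(u <- iota 0 (2 ^ m).+1) @Ev d T R c _ (gC p) (W R m u) (rr p m).
Definition gT (t : nat) : 'I_(2 ^ t) -> nat := fun k => k.+1.
Definition BadT t := \big[setU/set0]_(u <- iota 0 (2 ^ (3 * t)).+1)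
  @Ev d T R c _ (gT t) (W R (3 * t) u) 2.
Definition Bad p := BadC p `|` BadT p.

Lemma gC_inj p : injective (gC p).
Proof. by move=> a b /eqP; rewrite /gC eqn_add2l => /eqP /val_inj. Qed.
Lemma gC_pos p k : (0 < gC p k)%N.
Proof. by rewrite /gC addn_gt0 expn_gt0. Qed.
Lemma gT_inj t : injective (gT t).
Proof. by move=> a b [] /val_inj. Qed.
Lemma gT_pos t k : (0 < gT t k)%N.
Proof. by []. Qed.

Lemma PW k m u : (0 < k)%N -> (P (c k @^-1` W R m u) <= (M * 3 / 2 ^+ m)%:E)%E.
Proof.
move=> k0; have t0 : 0 < 2 ^+ m :> R by rewrite exprn_gt0.
have := @dens_bound d T R P c f M hfmeas hfge0 hM hdistr k ((u%:R - 1) / 2 ^+ m)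
  ((u%:R + 2) / 2 ^+ m) k0.
rewrite ltr_pM2r ?invr_gt0 // ltrD2l => /(_ ltac:(lra)) H.
apply: le_trans H _.
rewrite lee_fin le_eqVlt; apply/orP; left; apply/eqP; field.
by rewrite gt_eqF.
Qed.

Lemma Bad_meas p : measurable (Bad p).
Proof.
apply: measurableU.
  apply: bigsetU_measurable => m _; apply: bigsetU_measurable => u _.
  by apply: (@Ev_meas d T R c hmeas) => //; [exact: gC_pos | exact: W_meas].
by apply: bigsetU_measurable => u _; apply: (@Ev_meas d T R c hmeas) => //; exact: W_meas.
Qed.

Lemma P_EvC p m u : (P (@Ev d T R c _ (gC p) (W R m u) (rr p m)) <= ((2 ^+ r0 p)^-1)%:E)%E.
Proof.
have t0 : 0 < 2 ^+ m :> R by rewrite exprn_gt0.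
have rho0 : 0 <= M * 3 / 2 ^+ m by rewrite divr_ge0 ?mulr_ge0 // ltW.
apply: le_trans (@Ev_prob d T R P c hmeas hindep _ (gC p) (W R m u) (rr p m)
   (M * 3 / 2 ^+ m) (@gC_inj p) (gC_pos p) (W_meas _ _ _) rho0 _) _.
  by move=> k; apply: PW; exact: gC_pos.
rewrite lee_fin; apply: le_trans (@binom_tail R _ _ _ rho0 _) _.
  have e : 8 * (3 * 2 ^ p)%N%:R * (M * 3 / 2 ^+ m) = 72 * M * 2 ^+ p / 2 ^+ m :> R.
    by rewrite natrM natrX; field; rewrite gt_eqF.
  rewrite e /rr.
  set X := 72 * M * 2 ^+ p / 2 ^+ m.
  have h1 := truncnS_gt X; rewrite -natr1 in h1.
  have h2 : 0 <= (r0 p)%:R :> R by [].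
  rewrite natrD natrD; lra.
rewrite lef_pV2 ?posrE ?exprn_gt0 // ler_eXn2l ?ltr1n //.
by rewrite /rr leq_addl.
Qed.

Lemma P_BadC p : (P (BadC p) <= ((2 ^+ p)^-1)%:E)%E.
Proof.
have mE m u : measurable (@Ev d T R c _ (gC p) (W R m u) (rr p m)).
  by apply: (@Ev_meas d T R c hmeas) => //; [exact: gC_pos | exact: W_meas].
rewrite /BadC.
apply: le_trans (@union_bound d T R P nat (iota 0 (3 * p + 7)) _
   (2 ^+ (3 * p + 7) * (2 ^+ r0 p)^-1) _ _) _.
- by move=> m; apply: bigsetU_measurable.
- move=> m; rewrite mem_iota add0n => /andP[_ hm].
  apply: le_trans (@union_bound d T R P nat (iota 0 (2 ^ m).+1) _
     ((2 ^+ r0 p)^-1) _ _) _ => //.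
    by move=> u _; exact: P_EvC.
  rewrite size_iota lee_fin ler_wpM2r ?invr_ge0 ?exprn_ge0 //.
  by rewrite -natrX ler_nat ltn_exp2l.
rewrite size_iota lee_fin.
have t0 : 0 < 2 ^+ r0 p :> R by rewrite exprn_gt0.
have tp : 0 < 2 ^+ p :> R by rewrite exprn_gt0.
rewrite mulrA ler_pdivrMr // [X in _ <= X]mulrC ler_pdivlMr //.
rewrite -!natrX -!natrM ler_nat.
apply: leq_trans (_ : (2 ^ (p + 9) * 2 ^ (3 * p + 7) * 2 ^ p <= _)%N).
  by rewrite !leq_mul2r lin_exp !orbT.
by rewrite -!expnD /r0; apply: leq_pexp2l => //; lia.
Qed.

Lemma bin2_le n : ('C(n, 2) <= n ^ 2)%N.
Proof.
have := bin_ffact n 2; have := ffact_le_exp n 2.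
move=> h e; rewrite -e in h; change (2 `!) with 2%N in h; lia.
Qed.

Lemma P_BadT t : (P (BadT t) <= (18 * M ^+ 2 / 2 ^+ t)%:E)%E.
Proof.
set X := 2 ^+ t : R.
have X0 : 0 < X by rewrite exprn_gt0.
have e3 : (2:R) ^+ (3 * t) = X ^+ 3 by rewrite mulnC exprM.
have mE u : measurable (@Ev d T R c _ (gT t) (W R (3 * t) u) 2).
  by apply: (@Ev_meas d T R c hmeas) => //; exact: W_meas.
have rho0 : 0 <= M * 3 / 2 ^+ (3 * t) by rewrite divr_ge0 ?mulr_ge0 // exprn_ge0.
rewrite /BadT.
apply: le_trans (@union_bound d T R P nat (iota 0 (2 ^ (3 * t)).+1) _
   (9 * M ^+ 2 / X ^+ 4) _ _) _ => //.
  move=> u _.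
  apply: le_trans (@Ev_prob d T R P c hmeas hindep _ (gT t) (W R (3 * t) u) 2
   (M * 3 / 2 ^+ (3 * t)) (@gT_inj t) (gT_pos t) (W_meas _ _ _) rho0 _) _.
    by move=> k; apply: PW; exact: gT_pos.
  rewrite lee_fin.
  apply: le_trans (_ : X ^+ 2 * (M * 3 / 2 ^+ (3 * t)) ^+ 2 <= _).
    apply: ler_wpM2r; first exact: exprn_ge0.
    by rewrite /X -natrX -natrX ler_nat bin2_le.
  rewrite e3 le_eqVlt; apply/orP; left; apply/eqP; field.
  by rewrite gt_eqF.
rewrite size_iota lee_fin.
have h : ((2 ^ (3 * t)).+1)%:R <= 2 * X ^+ 3 :> R.
  rewrite -e3 -natrX -(natrM _ 2) ler_nat mul2n -addnn.
  by rewrite -addn1 leq_add2l expn_gt0.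
apply: le_trans (ler_wpM2r _ h) _.
  by rewrite divr_ge0 ?mulr_ge0 ?sqr_ge0 // exprn_ge0.
rewrite le_eqVlt; apply/orP; left; apply/eqP; field.
by rewrite gt_eqF.
Qed.

Lemma P_Bad p : (P (Bad p) <= ((2 * (1 + 18 * M ^+ 2)) / (2 ^ (p + 1))%:R)%:E)%E.
Proof.
have mC : measurable (BadC p).
  by apply: bigsetU_measurable => m _; apply: bigsetU_measurable => u _;
    apply: (@Ev_meas d T R c hmeas) => //; [exact: gC_pos | exact: W_meas].
have mT : measurable (BadT p).
  by apply: bigsetU_measurable => u _; apply: (@Ev_meas d T R c hmeas) => //; exact: W_meas.
apply: le_trans (measureU2 _ mC mT) _.
apply: le_trans (leeD (P_BadC p) (P_BadT p)) _.
rewrite -EFinD lee_fin natrX addn1 (exprS (2:R) p).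
have tp : 0 < 2 ^+ p :> R by rewrite exprn_gt0.
rewrite le_eqVlt; apply/orP; left; apply/eqP; field.
by rewrite gt_eqF.
Qed.

Lemma sum_Bad : (\sum_(0 <= n <oo) P (Bad n) < +oo)%E.
Proof.
set r := 2 * (1 + 18 * M ^+ 2).
apply: (@le_lt_trans _ _ (\sum_(0 <= n <oo) (r / (2 ^ (n + 1))%:R)%:E)%E).
  apply: lee_nneseries => n _ //; exact: P_Bad.
have hv := @cvg_geometric_eseries_half R r 0.
have -> : (\sum_(0 <= n <oo) (r / (2 ^ (n + 1))%:R)%:E)%E = (r / 2 ^+ 0)%:E.
  by apply: cvg_lim => //; exact: hv.
exact: ltry.
Qed.

Lemma ae_good : {ae P, forall w, ~ lim_sup_set Bad w}.
Proof.
exists (lim_sup_set Bad); split.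
- apply: bigcap_measurable; first by exists 0.
  by move=> k _; apply: bigcup_measurable => j _; exact: Bad_meas.
- exact: lim_sup_set_cvg0 Bad_meas sum_Bad.
- by move=> w /= /contra_notP; apply.
Qed.

Lemma ae01 : {ae P, forall w, forall k, (0 < k)%N -> 0 <= c k w <= 1}.
Proof.
apply: ae_foralln => k.
case: k => [|k]; first by apply: aeW.
exists (c k.+1 @^-1` ~` `[0%R, 1%R]%classic); split.
- by apply: mpre => //; apply: measurableC; exact: measurable_itv.
- exact: (@out01 d T R P c f hdistr).
- move=> w /= H1 H2; apply: H1 => _; move: H2.
  by rewrite /= in_itv /=.
Qed.

Lemma good_tiny w t : ~ BadT t w -> (forall k, (0 < k)%N -> 0 <= c k w <= 1) ->
  forall i j, (0 < i)%N -> (0 < j)%N -> (i <= 2 ^ t)%N -> (j <= 2 ^ t)%N -> i != j ->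
  (2 ^+ (3 * t))^-1 <= `|c i w - c j w|.
Proof.
move=> hB h01 i j i0 j0 it jt ij.
rewrite leNgt; apply/negP => hlt; apply: hB.
have [hu hWj] := @window_mem R _ _ _ (h01 i i0) hlt.
have hii : `|c i w - c i w| < (2 ^+ (3 * t))^-1 :> R.
  by rewrite subrr normr0 invr_gt0 exprn_gt0.
have [_ hWi] := @window_mem R _ _ _ (h01 i i0) hii.
set u := Num.truncn _ in hu hWj hWi.
apply: (@bigU_mem d T nat _ _ u); first by rewrite mem_iota add0n ltnS.
apply: Ev_mem.
have i1 : (i.-1 < 2 ^ t)%N by lia.
have j1 : (j.-1 < 2 ^ t)%N by lia.
apply/card_gt1P; exists (Ordinal i1), (Ordinal j1); split.
- by rewrite inE /gT /= prednK //; apply/mem_set.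
- by rewrite inE /gT /= prednK //; apply/mem_set.
- apply/negP => /eqP [] e; move/negP: ij; apply; apply/eqP; lia.
Qed.

Lemma good_count w p : ~ BadC p w -> forall n2, (2 ^ p <= n2)%N -> (n2 < 2 ^ p.+1)%N ->
  forall m y, (m < 3 * p + 7)%N -> 0 <= y <= 1 ->
  \sum_(n2 <= j < 2 * n2) ind R (`|y - c j w| < (2 ^+ m)^-1)
    <= 72 * M * 2 ^+ p / 2 ^+ m + (5 * p + 16)%N%:R.
Proof.
move=> hB n2 hp1 hp2 m y hm y01.
have hyy : `|y - y| < (2 ^+ m)^-1 :> R by rewrite subrr normr0 invr_gt0 exprn_gt0.
have [hu _] := @window_mem R _ _ _ y01 hyy.
set u := Num.truncn _ in hu.
set Q' := fun j => c j w \in W R m u.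
have hcard : (#|[set k : 'I_(3 * 2 ^ p) | Q' (2 ^ p + k)%N]%SET| < rr p m)%N.
  rewrite ltnNge; apply/negP => H; apply: hB.
  apply: (@bigU_mem d T nat _ _ m); first by rewrite mem_iota add0n.
  apply: (@bigU_mem d T nat _ _ u); first by rewrite mem_iota add0n ltnS.
  exact: Ev_mem.
pose Qb := fun j => `|y - c j w| < (2 ^+ m)^-1.
have hsum : (\sum_(n2 <= j < 2 * n2) Qb j <=
    #|[set k : 'I_(3 * 2 ^ p) | Q' (2 ^ p + k)%N]%SET|)%N.
  apply: leq_trans _ (block_count Q' p n2 hp1 hp2).
  rewrite big_nat [X in (_ <= X)%N]big_nat; apply: leq_sum => j _.
  case hj : (Qb j) => //; rewrite lt0b /Q'.
  by apply/mem_set; have [_ ?] := @window_mem R _ _ _ y01 hj.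
have -> : \sum_(n2 <= j < 2 * n2) ind R (`|y - c j w| < (2 ^+ m)^-1) =
    (\sum_(n2 <= j < 2 * n2) (Qb j : nat))%N%:R.
  by rewrite natr_sum; apply: eq_bigr => j _; rewrite /ind /Qb; case: ifP.
have X0 : 0 <= 72 * M * 2 ^+ p / 2 ^+ m :> R.
  by rewrite divr_ge0 ?mulr_ge0 ?exprn_ge0.
set X := 72 * M * 2 ^+ p / 2 ^+ m in X0 *.
have h : (\sum_(n2 <= j < 2 * n2) (Qb j : nat) <= Num.truncn X + r0 p)%N.
  by have := leq_ltn_trans hsum hcard; rewrite /rr -/X; lia.
apply: le_trans (_ : (Num.truncn X + r0 p)%N%:R <= _); first by rewrite ler_nat.
rewrite natrD; apply: lerD => //.
by rewrite truncn_le.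
Qed.
End Final.

Lemma sym_sum (R : realType) (x : nat -> R) a1 b1 a2 b2 (dl : R) :
  \sum_(a1 <= i < b1) \sum_(a2 <= j < b2 | (i != j) && (`|x i - x j| < dl)) (- ln `|x i - x j|)
  = \sum_(a2 <= i < b2) \sum_(a1 <= j < b1 | (i != j) && (`|x i - x j| < dl)) (- ln `|x i - x j|).
Proof.
rewrite (eq_bigr (fun i => \sum_(a2 <= j < b2)
   (if (i != j) && (`|x i - x j| < dl) then - ln `|x i - x j| else 0))); last first.
  by move=> i _; rewrite big_mkcond.
rewrite [RHS](eq_bigr (fun i => \sum_(a1 <= j < b1)
   (if (i != j) && (`|x i - x j| < dl) then - ln `|x i - x j| else 0))); last first.
  by move=> i _; rewrite big_mkcond.
rewrite exchange_big; apply: eq_bigr => j _; apply: eq_bigr => i _.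
by rewrite eq_sym distrC.
Qed.

Theorem lemma2p3 (d : measure_display) (T : measurableType d) (R : realType)
  (P : probability T R) (c : nat -> T -> R) (f : R -> R) (lambda : R)
  (l : nat -> R)
  (hmeas : forall k, (0 < k)%N -> measurable_fun setT (c k))
  (hindep : mutually_independent P [set k | (0 < k)%N] c)
  (hfmeas : measurable_fun setT f)
  (hfge0 : forall x, 0 <= f x)
  (hfbd : exists M : R, forall x, f x <= M)
  (hfpos : {ae (@lebesgue_measure R), forall x, x \in `[0%R, 1%R]%classic -> 0 < f x})
  (hdistr : forall k, (0 < k)%N -> forall A : set R, measurable A ->
     P (c k @^-1` A) = (\int[@lebesgue_measure R]_(x in A `&` `[0%R, 1%R]%classic) (f x)%:E)%E)
  (hlambda : 0 < lambda)
  (hl : forall k, l k = expR (- lambda * k%:R)) :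
  {ae P, forall w,
    forall eps : R, 0 < eps -> exists2 delta : R, 0 < delta &
      exists N : nat, forall n : nat, (N <= n)%N ->
        forall a b : nat, (a%:Z <= @qlog R n)%R -> (b%:Z <= @qlog R n)%R ->
          (\sum_(2 ^ a * n <= i < 2 ^ a.+1 * n)
             \sum_(2 ^ b * n <= j < 2 ^ b.+1 * n
                    | (i != j) && (`|c i w - c j w| < delta))
                (- ln `|c i w - c j w|))
          / ((2 ^ a * n)%:R * (2 ^ b * n)%:R) < eps}.
Proof.
have [M hM] := hfbd.
have M0 : 0 <= M by exact: le_trans (hfge0 0) (hM 0).
have ae1 := @ae_good d T R P c f M hmeas hindep hfmeas hfge0 hM hdistr.
have ae2 := @ae01 d T R P c f hmeas hdistr.
apply: (filterS2 _ _ ae2 ae1) => w h01 hgood eps eps0.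
have [P0 HP0] : exists P0, forall p, (P0 <= p)%N -> ~ Bad d T R c M p w.
  move: hgood; rewrite /lim_sup_set => /existsNP [P0 H]; exists P0 => p hp Bp.
  by apply: H; exists p.
have e2 : 0 < eps / 2 by rewrite divr_gt0.
have [K HK] := @eventually_small R (288 * M) (eps / 2) (mulr_ge0 (ler0n R 288) M0) e2.
have [P1 HP1] := @eventually_small R 90 (eps / 2) (ler0n _ _) e2.
exists ((2 ^+ K)^-1); first by rewrite invr_gt0 exprn_gt0.
set Pb := maxn P0 (maxn K P1).
exists (2 ^ Pb)%N => n hn a b _ _.
have key : forall n1 n2, (0 < n1)%N -> (n1 <= n2)%N -> (2 ^ Pb <= n2)%N ->
  (\sum_(n1 <= i < 2 * n1) \sum_(n2 <= j < 2 * n2 | (i != j) && (`|c i w - c j w| < (2 ^+ K)^-1))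
       (- ln `|c i w - c j w|)) / (n1%:R * n2%:R) < eps.
  move=> n1 n2 n10 n12 hn2.
  have n20 : (0 < n2)%N by lia.
  have [hp1 hp2] : (2 ^ trunc_log 2 n2 <= n2)%N /\ (n2 < 2 ^ (trunc_log 2 n2).+1)%N.
    by have /andP[] := trunc_log_bounds (isT : (1 < 2)%N) n20.
  set p := trunc_log 2 n2 in hp1 hp2.
  have hPb : (Pb <= p)%N by apply: trunc_log_max.
  have hKp : (K <= p)%N by rewrite /Pb in hPb; lia.
  have hP0 : (P0 <= p)%N by rewrite /Pb in hPb; lia.
  have hP1 : (P1 <= p)%N by rewrite /Pb in hPb; lia.
  have nBC : ~ BadC d T R c M p w by move=> H; apply: (HP0 p hP0); left.
  have nBT : ~ BadT d T R c (p + 2) w.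
    by move=> H; apply: (HP0 (p + 2)%N); [lia | right].
  apply: le_lt_trans (@main_det R (fun j => c j w) M K p n1 n2 M0 n12 n10 hp1 hp2 _ h01 _ _) _.
  - lia.
  - move=> i j i0 j0 ip jp ij.
    apply: (@good_tiny d T R c f M hfge0 hM w (p + 2) nBT h01) => //; lia.
  - move=> m y hm y01.
    exact: (@good_count d T R c f M hfge0 hM w p nBC n2 hp1 hp2 m y hm y01).
  rewrite [X in _ < X](splitr eps).
  apply: ltrD; first exact: HK.
  exact: HP1.
have hn0 : (0 < n)%N by apply: leq_trans hn; rewrite expn_gt0.
rewrite !expnS -!mulnA.
have hna : (2 ^ Pb <= 2 ^ a * n)%N by apply: leq_trans hn _; rewrite leq_pmull // expn_gt0.
have hnb : (2 ^ Pb <= 2 ^ b * n)%N by apply: leq_trans hn _; rewrite leq_pmull // expn_gt0.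
have ha0 : (0 < 2 ^ a * n)%N by rewrite muln_gt0 expn_gt0.
have hb0 : (0 < 2 ^ b * n)%N by rewrite muln_gt0 expn_gt0.
case: (leqP (2 ^ a * n) (2 ^ b * n)) => hab.
  exact: key.
rewrite (@sym_sum R (fun j => c j w)) (mulrC (2 ^ a * n)%:R).
by apply: key => //; exact: ltnW.
Qed.
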